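(* Let $\mathcal M,\mathcal X,\mathcal Y$ be finite sets, $P_M$ a distribution on $\mathcal M$, $W_{Y|X}$ a channel from $\mathcal X$ to $\mathcal Y$. For every constant $c>0$ and every distribution $P_X$ on $\mathcal X$, \[ P_{js}(P_M,W_{Y|X})\le \sum_{\substack{(m,x,y):\\ P_M(m)P_X(x)W_{Y|X}(y|x)<cP_X(x)\bar W_Y(y)}}P_M(m)P_X(x)W_{Y|X}(y|x)\;+\;\sum_{\substack{(m,x,y):\\ P_M(m)P_X(x)W_{Y|X}(y|x)\ge cP_X(x)\bar W_Y(y)}}P_X(x)\bar W_Y(y), \] where $\bar W_Y(y):=\sum_x P_X(x)W_{Y|X}(y|x)$. Moreover, for fixed $P_M,P_X,W_{Y|X}$, the right-hand side, as a function of $c\in(0,\infty)$, attains its minimum at $c=1$.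
   Context: A code $\phi=(\mathsf e,\mathsf d)$ consists of an encoder $\mathsf e:\mathcal M\to\mathcal X$ and a decoder $\mathsf d:\mathcal Y\to\mathcal M$. Its average error probability is $P_{js}[\phi|P_M,W_{Y|X}]:=\sum_{m\in\mathcal M}P_M(m)\,W_{Y|X}(\{y:\mathsf d(y)\neq m\}|\mathsf e(m))$, and $P_{js}(P_M,W_{Y|X}):=\inf_\phi P_{js}[\phi|P_M,W_{Y|X}]$. The second sum on the right-hand side is the measure of the indicated set under $1_M\times P_X\times\bar W_Y$, where $1_M$ is the counting measure on $\mathcal M$. *)

(* Defs.v *)
From HB Require Import structures.
From mathcomp Require Import all_boot all_order all_algebra.
Set Implicit Arguments. Unset Strict Implicit. Unset Printing Implicit Defensive.
Import Order.TTheory GRing.Theory Num.Theory.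
Local Open Scope ring_scope.

Definition is_distr (R : realFieldType) (T : finType) (P : T -> R) : Prop :=
  (forall t, 0 <= P t) /\ \sum_(t : T) P t = 1.

Definition is_channel (R : realFieldType) (X Y : finType) (W : X -> Y -> R) : Prop :=
  forall x, is_distr (W x).

Definition code (M X Y : finType) : finType :=
  ({ffun M -> X} * {ffun Y -> M})%type.

Definition err_prob (R : realFieldType) (M X Y : finType)
  (PM : M -> R) (W : X -> Y -> R) (phi : code M X Y) : R :=
  \sum_(m : M) PM m * \sum_(y : Y | phi.2 y != m) W (phi.1 m) y.

(* P_js(P_M, W) = inf over all codes (a minimum, the code set being finite;
   conventionally 0 if there are no codes at all). *)
Definition Pjs (R : realFieldType) (M X Y : finType)
  (PM : M -> R) (W : X -> Y -> R) : R :=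
  match enum [set: code M X Y] with
  | [::] => 0
  | phi0 :: _ => \big[Num.min/err_prob PM W phi0]_(phi : code M X Y) err_prob PM W phi
  end.

Definition Wbar (R : realFieldType) (X Y : finType)
  (PX : X -> R) (W : X -> Y -> R) (y : Y) : R :=
  \sum_(x : X) PX x * W x y.

Definition rhs (R : realFieldType) (M X Y : finType)
  (PM : M -> R) (PX : X -> R) (W : X -> Y -> R) (c : R) : R :=
  \sum_(m : M) \sum_(x : X) \sum_(y : Y |
        PM m * PX x * W x y < c * PX x * Wbar PX W y)
      PM m * PX x * W x y
  + \sum_(m : M) \sum_(x : X) \sum_(y : Y |
        PM m * PX x * W x y >= c * PX x * Wbar PX W y)
      PX x * Wbar PX W y.

(* Main.v *)
Require Import Defs.
From HB Require Import structures.
From mathcomp Require Import all_boot all_order all_algebra ring.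
Import Order.TTheory GRing.Theory Num.Theory.
Local Open Scope ring_scope.

Lemma prod_if (R : realFieldType) (M : finType) (m : M) (F : M -> R) :
  \prod_(i : M) (if i == m then F i else 1) = F m.
Proof.
by rewrite (bigD1 m) //= eqxx big1 ?mulr1 // => i /negbTE ->.
Qed.

Definition wt (R : realFieldType) (M X : finType) (PX : X -> R)
  (f : {ffun M -> X}) : R := \prod_i PX (f i).
Arguments wt {R M X} PX f.

Arguments prod_if {R M} m F.
Lemma sum_w1 (R : realFieldType) (M X : finType) (PX : X -> R) (m : M)
  (g : X -> R) : \sum_x PX x = 1 ->
  \sum_(f : {ffun M -> X}) wt PX f * g (f m) = \sum_j PX j * g j.
Proof.
move=> s1.
transitivity (\sum_(f : {ffun M -> X})
   \prod_i (PX (f i) * (if i == m then g (f i) else 1))).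
  by apply: eq_bigr => f _; rewrite big_split /= prod_if.
rewrite -(bigA_distr_bigA (fun i j => PX j * (if i == m then g j else 1))).
rewrite (bigD1 m) //= [X in _ * X]big1 ?mulr1; first by apply: eq_bigr => j _; rewrite eqxx.
move=> i /negbTE hi; rewrite -[RHS]s1; apply: eq_bigr => j _; by rewrite hi mulr1.
Qed.

Arguments sum_w1 {R M X} PX m g.
Lemma sum_w2 (R : realFieldType) (M X : finType) (PX : X -> R) (m m' : M)
  (g1 g2 : X -> R) : m' != m -> \sum_x PX x = 1 ->
  \sum_(f : {ffun M -> X}) wt PX f * (g1 (f m) * g2 (f m')) =
  (\sum_j PX j * g1 j) * (\sum_j PX j * g2 j).
Proof.
move=> hm s1.
transitivity (\sum_(f : {ffun M -> X})
   \prod_i (PX (f i) * ((if i == m then g1 (f i) else 1) *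
                        (if i == m' then g2 (f i) else 1)))).
  by apply: eq_bigr => f _; rewrite big_split /= big_split /= !prod_if.
rewrite -(bigA_distr_bigA (fun i j => PX j * ((if i == m then g1 j else 1) *
                        (if i == m' then g2 j else 1)))).
rewrite (bigD1 m) //= (bigD1 m') //= [X in _ * (_ * X)]big1 ?mulr1.
  congr (_ * _); apply: eq_bigr => j _.
    by rewrite eqxx eq_sym (negbTE hm) mulr1.
  by rewrite eqxx (negbTE hm) mul1r.
move=> i /andP [/negbTE h1 /negbTE h2]; rewrite -[RHS]s1; apply: eq_bigr => j _.
by rewrite h1 h2 !mulr1.
Qed.

Arguments sum_w2 {R M X} PX m m' g1 g2.
Lemma Pjs_le (R : realFieldType) (M X Y : finType)
  (PM : M -> R) (W : X -> Y -> R) (phi : code M X Y) :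
  Pjs PM W <= err_prob PM W phi.
Proof.
rewrite /Pjs; case E: (enum _) => [|phi0 s].
  have : phi \in enum [set: code M X Y] by rewrite mem_enum inE.
  by rewrite E.
by rewrite (bigD1 phi) //= ge_min lexx.
Qed.

Arguments Pjs_le {R M X Y} PM W phi.
Lemma rhsE (R : realFieldType) (M X Y : finType)
  (PM : M -> R) (PX : X -> R) (W : X -> Y -> R) (c : R) :
  rhs PM PX W c = \sum_m \sum_x \sum_y
    (if PM m * PX x * W x y < c * PX x * Wbar PX W y then PM m * PX x * W x y
     else PX x * Wbar PX W y).
Proof.
rewrite /rhs -big_split; apply: eq_bigr => m _.
rewrite -big_split; apply: eq_bigr => x _.
rewrite [RHS](bigID (fun y => PM m * PX x * W x y < c * PX x * Wbar PX W y)) /=.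
congr (_ + _); first by apply: eq_bigr => y ->.
apply: eq_big => [y|y]; [by rewrite leNgt | by rewrite leNgt => /negbTE ->].
Qed.

Lemma sum_min (R : realFieldType) (I : finType) (c a b : I -> R) :
  (forall i, 0 <= c i) ->
  \sum_i c i * Num.min (a i) (b i) <=
  Num.min (\sum_i c i * a i) (\sum_i c i * b i).
Proof.
move=> hc; rewrite le_min; apply/andP; split; apply: ler_sum => i _;
  apply: ler_wpM2l => //; by rewrite ge_min lexx ?orbT.
Qed.

Arguments sum_min {R I} c a b.

Theorem mainTheorem1 (R : realFieldType) (M X Y : finType)
  (PM : M -> R) (W : X -> Y -> R) (PX : X -> R) :
  is_distr PM -> is_channel W -> is_distr PX ->
  (forall c : R, 0 < c -> Pjs PM W <= rhs PM PX W c) /\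
  (forall c : R, 0 < c -> rhs PM PX W 1 <= rhs PM PX W c).
Proof.
move=> [PMge PMs] hW [PXge PXs].
have Wge x y : 0 <= W x y by case: (hW x) => h _; exact: h.
have Wbge y : 0 <= Wbar PX W y.
  by apply: sumr_ge0 => x _; apply: mulr_ge0.
have part2 : forall c, rhs PM PX W 1 <= rhs PM PX W c.
  move=> c; rewrite !rhsE; apply: ler_sum => m _; apply: ler_sum => x _;
  apply: ler_sum => y _; rewrite mul1r.
  set a := PM m * PX x * W x y; set b := PX x * Wbar PX W y.
  have H1 : (if a < b then a else b) <= a.
    by case: ifP => h; rewrite ?lexx // leNgt h.
  have H2 : (if a < b then a else b) <= b.
    by case: ifP => h; rewrite ?lexx // ltW.
  by case: (a < c * PX x * Wbar PX W y).
split; last by move=> c _; exact: part2.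
move=> c _; apply: le_trans (part2 c).
have rhs_ge0 : 0 <= rhs PM PX W 1.
  rewrite rhsE; apply: sumr_ge0 => m _; apply: sumr_ge0 => x _;
  apply: sumr_ge0 => y _; case: ifP => _; rewrite ?mulr_ge0 //.
case: (pickP (@predT M)) => [m0 _ | hM]; last first.
  case E: (enum [set: code M X Y]) => [|phi0 s]; first by rewrite /Pjs E.
  apply: le_trans (Pjs_le PM W phi0) _; apply: le_trans _ rhs_ge0.
  by rewrite /err_prob big1 // => m; have := hM m.
pose d (f : {ffun M -> X}) : {ffun Y -> M} :=
  [ffun y => Order.arg_max m0 xpredT (fun m => PM m * W (f m) y)].
have dP (f : {ffun M -> X}) y m : PM m * W (f m) y <= PM (d f y) * W (f (d f y)) y.
  rewrite /d ffunE; case: (@arg_maxP _ _ _ m0 xpredT (fun m => PM m * W (f m) y) isT).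
  by move=> i _ H; apply: H.
pose G (f : {ffun M -> X}) m y := Num.min (PM m * W (f m) y)
                 (\sum_(m' | m' != m) PM m' * W (f m') y).
have errle (f : {ffun M -> X}) : err_prob PM W (f, d f) <= \sum_m \sum_y G f m y.
  rewrite /err_prob; apply: ler_sum => m _; rewrite mulr_sumr big_mkcond /=.
  apply: ler_sum => y _; rewrite /G; case: ifP => hd.
    rewrite le_min lexx /=; apply: le_trans (dP f y m) _.
    rewrite (bigD1 (d f y)) //= lerDl; apply: sumr_ge0 => i _.
    exact: mulr_ge0.
  rewrite le_min mulr_ge0 //=; apply: sumr_ge0 => i _; exact: mulr_ge0.
have wge (f : {ffun M -> X}) : 0 <= wt PX f by apply: prodr_ge0.
have ws : \sum_(f : {ffun M -> X}) wt PX f = 1.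
  transitivity (\sum_(f : {ffun M -> X}) wt PX f * 1).
    by apply: eq_bigr => f _; rewrite mulr1.
  rewrite (sum_w1 PX m0 (fun _ => 1) PXs) -[RHS]PXs.
  by apply: eq_bigr => j _; rewrite mulr1.
have ind x : \sum_j PX j * (j == x)%:R = PX x.
  rewrite (bigD1 x) //= eqxx mulr1 big1 ?addr0 // => j /negbTE ->.
  by rewrite mulr0.
have avg m y : \sum_(f : {ffun M -> X}) wt PX f * G f m y <=
   \sum_x Num.min (PM m * PX x * W x y) (PX x * Wbar PX W y).
  have -> : \sum_(f : {ffun M -> X}) wt PX f * G f m y = (\sum_x \sum_(f : {ffun M -> X}) wt PX f * (f m == x)%:R *
      Num.min (PM m * W x y) (\sum_(m' | m' != m) PM m' * W (f m') y)).
    rewrite exchange_big /=; apply: eq_bigr => f _.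
    rewrite (bigD1 (f m)) //= eqxx mulr1 [X in _ + X]big1 ?addr0 //.
    by move=> x hx; rewrite eq_sym (negbTE hx) mulr0 mul0r.
  apply: ler_sum => x _.
  apply: le_trans (sum_min (fun f : {ffun M -> X} => wt PX f * (f m == x)%:R)
      (fun _ => PM m * W x y)
      (fun f => \sum_(m' | m' != m) PM m' * W (f m') y) _) _.
    by move=> f; apply: mulr_ge0 => //; apply: ler0n.
  have E1 : \sum_(f : {ffun M -> X}) wt PX f * (f m == x)%:R * (PM m * W x y)
      = PM m * PX x * W x y.
    rewrite -mulr_suml (sum_w1 PX m (fun j => (j == x)%:R) PXs) ind.
    by rewrite mulrCA mulrA.
  have E2 : \sum_(f : {ffun M -> X}) wt PX f * (f m == x)%:R *
      (\sum_(m' | m' != m) PM m' * W (f m') y) <= PX x * Wbar PX W y.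
    have -> : \sum_(f : {ffun M -> X}) wt PX f * (f m == x)%:R *
      (\sum_(m' | m' != m) PM m' * W (f m') y) = (\sum_(m' | m' != m) PM m' * (PX x * Wbar PX W y)).
      rewrite (eq_bigr (fun f : {ffun M -> X} => \sum_(m' | m' != m) PM m' *
          (wt PX f * ((f m == x)%:R * W (f m') y)))); last first.
        by move=> f _; rewrite mulr_sumr; apply: eq_bigr => m' _; ring.
      rewrite exchange_big /=; apply: eq_bigr => m' hm'.
      rewrite -mulr_sumr (sum_w2 PX m m' (fun j => (j == x)%:R) (fun j => W j y) hm' PXs).
      by rewrite ind.
    rewrite -mulr_suml; apply: ler_piMl; first exact: mulr_ge0.
    rewrite -PMs [X in _ <= X](bigD1 m) //= lerDr; exact: PMge.
  rewrite E1 le_min ge_min lexx /= ge_min E2 orbT.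
  done.
apply: (@le_trans _ _ (\sum_(f : {ffun M -> X}) wt PX f * err_prob PM W (f, d f))).
  rewrite -[X in X <= _]mul1r -ws mulr_suml; apply: ler_sum => f _.
  by apply: ler_wpM2l => //; apply: Pjs_le.
apply: (@le_trans _ _ (\sum_(f : {ffun M -> X}) wt PX f * \sum_m \sum_y G f m y)).
  by apply: ler_sum => f _; apply: ler_wpM2l.
have -> : \sum_(f : {ffun M -> X}) wt PX f * \sum_m \sum_y G f m y = (\sum_m \sum_y \sum_(f : {ffun M -> X}) wt PX f * G f m y).
  transitivity (\sum_(f : {ffun M -> X}) \sum_m \sum_y wt PX f * G f m y).
    apply: eq_bigr => f _; rewrite mulr_sumr; apply: eq_bigr => m _.
    by rewrite mulr_sumr.
  rewrite exchange_big /=; apply: eq_bigr => m _.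
  by rewrite exchange_big.
rewrite rhsE; apply: ler_sum => m _; rewrite [X in _ <= X]exchange_big /=.
apply: ler_sum => y _; apply: le_trans (avg m y) _; apply: ler_sum => x _.
rewrite mul1r; case: ifP => _; by rewrite ge_min lexx ?orbT.
Qed.
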